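(* Let $P_i$ denote the Legendre polynomials and $L_i=\sqrt{\tfrac{2}{2i+1}}\,P_i$. There does not exist a family $\{\Delta_n\}_{n=0}^{\infty}$ of functions on $(-1,1)$ such that each $\Delta_n$ is continuous on $(-1,1)$, each $\Delta_n$ is equal at every point of $(-1,1)$ to the sum of its Fourier–Legendre series $\sum_{i=0}^{\infty}\alpha_i^n L_i(x)$ with $\alpha_i^n=\int_{-1}^{1}\Delta_n(x)L_i(x)\,dx$, and \[ \int_{-1}^{1} x^{k}\,\Delta_n(x)\,dx=\delta_{k,n}\qquad\text{for all }k,n\in\mathbb{N}_0 . \]
   Context: $\delta_{k,n}$ is the Kronecker delta. The functions $\Delta_n$ in the claim are called ''delta functions'' for the raw-moment functionals $f\mapsto\int_{-1}^{1}x^k f(x)\,dx$. *)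

(* Defs.v *)
From Stdlib Require Import Reals.
From Coquelicot Require Import Coquelicot.
Open Scope R_scope.

(* leg_pair n x = (P_n x, P_(n+1) x), via Bonnet's recurrence
   (m+2) P_(m+2) = (2m+3) x P_(m+1) - (m+1) P_m,  P_0 = 1, P_1 = x. *)
Fixpoint leg_pair (n : nat) (x : R) : R * R :=
  match n with
  | O => (1, x)
  | S m => let (p, q) := leg_pair m x in
           (q, ((2 * INR m + 3) * x * q - (INR m + 1) * p) / (INR m + 2))
  end.

Definition legendre (n : nat) (x : R) : R := fst (leg_pair n x).

Definition legendreL (n : nat) (x : R) : R :=
  sqrt (2 / (2 * INR n + 1)) * legendre n x.

Definition kdelta (k n : nat) : R := if Nat.eqb k n then 1 else 0.

(* Main.v *)
Require Import Defs.
From Stdlib Require Import Reals Lra Lia FunctionalExtensionality.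
From Coquelicot Require Import Coquelicot.
Open Scope R_scope.

Lemma leg0 x : legendre 0 x = 1.
Proof. reflexivity. Qed.
Lemma leg1 x : legendre 1 x = x.
Proof. reflexivity. Qed.
Lemma legSS i x : legendre (S (S i)) x =
  ((2 * INR i + 3) * x * legendre (S i) x - (INR i + 1) * legendre i x) / (INR i + 2).
Proof.
  unfold legendre. simpl. destruct (leg_pair i x) as [a b]. simpl. reflexivity.
Qed.

Fixpoint cpair (i : nat) : (nat -> R) * (nat -> R) :=
  match i with
  | O => (fun k => kdelta k 2, fun k => kdelta (S k) 2)
  | S m => let (a, b) := cpair m in
     (b, fun k => ((2 * INR m + 3) * b (S k) - (INR m + 1) * a k) / (INR m + 2))
  end.
Definition cc i := fst (cpair i).
Lemma cc0 k : cc 0 k = kdelta k 2. Proof. reflexivity. Qed.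
Lemma cc1 k : cc 1 k = kdelta (S k) 2. Proof. reflexivity. Qed.
Lemma ccSS i k : cc (S (S i)) k =
  ((2 * INR i + 3) * cc (S i) (S k) - (INR i + 1) * cc i k) / (INR i + 2).
Proof. unfold cc; simpl. destruct (cpair i) as [a b]. reflexivity. Qed.

Lemma ext_all (f g : R -> R) (l : R) :
  (forall x, f x = g x) ->
  is_RInt_gen f (at_right (-1)) (at_left 1) l -> is_RInt_gen g (at_right (-1)) (at_left 1) l.
Proof.
  intros E H. replace g with f; [exact H|]. apply functional_extensionality; exact E.
Qed.

Section Mom.
Variable D : R -> R.
Hypothesis H4 : forall k, is_RInt_gen (fun x => x ^ k * D x)
                     (at_right (-1)) (at_left 1) (kdelta k 2).

Lemma momA i : (forall k, is_RInt_gen (fun x => x ^ k * legendre i x * D x)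
                     (at_right (-1)) (at_left 1) (cc i k)) /\
               (forall k, is_RInt_gen (fun x => x ^ k * legendre (S i) x * D x)
                     (at_right (-1)) (at_left 1) (cc (S i) k)).
Proof.
  induction i as [|i [IH1 IH2]].
  - split; intro k.
    + rewrite cc0. eapply ext_all; [|apply (H4 k)].
      intros; rewrite leg0; ring.
    + rewrite cc1. eapply ext_all; [|apply (H4 (S k))].
      intros; rewrite leg1; simpl; ring.
  - split; [exact IH2|]. intro k. rewrite ccSS.
    pose proof (is_RInt_gen_minus _ _ _ _
      (is_RInt_gen_scal _ (2 * INR i + 3) _ (IH2 (S k)))
      (is_RInt_gen_scal _ (INR i + 1) _ (IH1 k))) as H.
    pose proof (is_RInt_gen_scal _ (/ (INR i + 2)) _ H) as H'.
    replace (((2 * INR i + 3) * cc (S i) (S k) - (INR i + 1) * cc i k) / (INR i + 2))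
        with (scal (/ (INR i + 2)) (minus (scal (2 * INR i + 3) (cc (S i) (S k)))
                                     (scal (INR i + 1) (cc i k)))).
    + eapply ext_all; [|exact H'].
      intros. rewrite legSS.
      unfold scal, minus, plus, opp; simpl; unfold mult; simpl. field.
      pose proof (pos_INR i); lra.
    + unfold scal, minus, plus, opp; simpl; unfold mult; simpl. field.
      pose proof (pos_INR i); lra.
Qed.
End Mom.

Definition p i := legendre i 0.
Lemma pSS i : p (S (S i)) = - (INR i + 1) * p i / (INR i + 2).
Proof. unfold p; rewrite legSS. field. pose proof (pos_INR i); lra. Qed.
Lemma p0 : p 0 = 1. Proof. reflexivity. Qed.
Lemma p1 : p 1 = 0. Proof. reflexivity. Qed.

Definition PP i := cc i 0 = - (INR i * (INR i + 1)) / 2 * p i /\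
   cc i 1 = - (INR i + 1) * p (S i) /\ cc i 2 = p i /\
   forall k, (3 <= k)%nat -> cc i k = 0.

Lemma PP0 : PP 0.
Proof.
  unfold PP. repeat split.
  all: try (intros k Hk; unfold cc; simpl; unfold kdelta;
            destruct k as [|[|[|k]]]; [lia|lia|lia|reflexivity]).
  all: unfold cc, p, legendre; simpl; unfold kdelta; simpl; field.
Qed.
Lemma PP1 : PP 1.
Proof.
  unfold PP. repeat split.
  all: try (intros k Hk; unfold cc; simpl; unfold kdelta;
            destruct k as [|[|[|k]]]; [lia|lia|lia|reflexivity]).
  all: unfold cc, p, legendre; simpl; unfold kdelta; simpl; field.
Qed.

Lemma ccform i : PP i /\ PP (S i).
Proof.
  induction i as [|i [[A0 [A1 [A2 A3]]] [B0 [B1 [B2 B3]]]]].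
  - exact (conj PP0 PP1).
  - split; [repeat split; assumption|].
    pose proof (pos_INR i) as Hi.
    repeat split.
    + rewrite ccSS, B1, A0, pSS, !S_INR. field. lra.
    + rewrite ccSS, B2, A1, (pSS (S i)), !S_INR. field. lra.
    + rewrite ccSS, B3, A2 by lia. rewrite pSS. field. lra.
    + intros k Hk. rewrite ccSS, B3, A3 by lia. field. lra.
Qed.

Lemma pbound m : 4 * (INR m + 1) * (p (2 * m + 2)) ^ 2 >= 1.
Proof.
  induction m as [|m IH].
  - simpl. rewrite pSS, p0. simpl. lra.
  - replace (2 * S m + 2)%nat with (S (S (2 * m + 2))) by lia.
    rewrite pSS. rewrite S_INR.
    replace (INR (2 * m + 2)) with (2 * INR m + 2)
      by (rewrite plus_INR, mult_INR; simpl; ring).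
    pose proof (pos_INR m) as Hm.
    set (a := p (2 * m + 2)) in *.
    replace ((- (2 * INR m + 2 + 1) * a / (2 * INR m + 2 + 2)) ^ 2)
      with ((2 * INR m + 3) ^ 2 / (4 * (INR m + 2) ^ 2) * a ^ 2) by (field; lra).
    assert (Ha : 0 <= a ^ 2) by (simpl; nra).
    assert (E : 4 * (INR m + 1 + 1) * ((2 * INR m + 3) ^ 2 / (4 * (INR m + 2) ^ 2) * a ^ 2)
              = (2 * INR m + 3) ^ 2 / (INR m + 2) * a ^ 2) by (field; lra).
    rewrite E.
    assert ((2 * INR m + 3) ^ 2 / (INR m + 2) >= 4 * (INR m + 1)).
    { replace ((2 * INR m + 3) ^ 2 / (INR m + 2)) with (4 * (INR m + 1) + / (INR m + 2))
        by (field; lra).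
      assert (0 < / (INR m + 2)) by (apply Rinv_0_lt_compat; lra). lra. }
    nra.
Qed.

Theorem proposition1 :
  ~ exists (Delta : nat -> R -> R) (alpha : nat -> nat -> R),
      (forall n x, -1 < x < 1 -> continuous (Delta n) x) /\
      (forall n i, is_RInt_gen (fun x => Delta n x * legendreL i x)
                     (at_right (-1)) (at_left 1) (alpha n i)) /\
      (forall n x, -1 < x < 1 ->
         is_series (fun i => alpha n i * legendreL i x) (Delta n x)) /\
      (forall k n, is_RInt_gen (fun x => x ^ k * Delta n x)
                     (at_right (-1)) (at_left 1) (kdelta k n)).
Proof.
  intros [Delta [alpha [Hc [H2 [H3 H4]]]]].
  assert (Hm : forall k, is_RInt_gen (fun x => x ^ k * Delta 2%nat x)
                     (at_right (-1)) (at_left 1) (kdelta k 2)) by (intro k; apply H4).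
  assert (Ha : forall i, alpha 2%nat i = sqrt (2 / (2 * INR i + 1)) * cc i 0).
  { intro i. pose proof (proj1 (momA _ Hm i) 0%nat) as M.
    pose proof (is_RInt_gen_scal _ (sqrt (2 / (2 * INR i + 1))) _ M) as M'.
    assert (M2 : is_RInt_gen (fun x => Delta 2%nat x * legendreL i x) (at_right (-1)) (at_left 1)
               (sqrt (2 / (2 * INR i + 1)) * cc i 0)).
    { eapply ext_all; [|exact M']. intros; unfold scal, legendreL; simpl; unfold mult; simpl; ring. }
    pose proof (@is_RInt_gen_unique R_CompleteNormedModule _ _
      (Proper_StrongProper _ (at_right_proper_filter _))
      (Proper_StrongProper _ (at_left_proper_filter _)) _ _ M2) as M4.
    pose proof (@is_RInt_gen_unique R_CompleteNormedModule _ _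
      (Proper_StrongProper _ (at_right_proper_filter _))
      (Proper_StrongProper _ (at_left_proper_filter _)) _ _ (H2 2%nat i)) as M3.
    congruence. }
  assert (Hs : ex_series (fun i => alpha 2%nat i * legendreL i 0)).
  { eexists. apply H3. lra. }
  apply ex_series_lim_0 in Hs. apply is_lim_seq_spec in Hs.
  destruct (Hs (mkposreal (1/4) ltac:(lra))) as [N HN].
  set (n := (2 * N + 2)%nat).
  specialize (HN n ltac:(unfold n; lia)). cbv beta in HN.
  rewrite Ha in HN. unfold legendreL in HN. change (legendre n 0) with (p n) in HN.
  destruct (ccform n) as [[C0 _] _]. rewrite C0 in HN.
  pose proof (pbound N) as B. fold n in B.
  assert (En : INR n = 2 * INR N + 2) by (unfold n; rewrite plus_INR, mult_INR; simpl; ring).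
  pose proof (pos_INR N) as HN0.
  assert (Hpos : 0 <= 2 / (2 * INR n + 1)) by (apply Rlt_le, Rdiv_lt_0_compat; lra).
  replace (sqrt (2 / (2 * INR n + 1)) * (- (INR n * (INR n + 1)) / 2 * p n) *
             (sqrt (2 / (2 * INR n + 1)) * p n) - 0)
    with (- (INR n * (INR n + 1) / (2 * INR n + 1) * (p n) ^ 2)) in HN.
  2: { replace (sqrt (2 / (2 * INR n + 1)) * (- (INR n * (INR n + 1)) / 2 * p n) *
             (sqrt (2 / (2 * INR n + 1)) * p n)) with
        (sqrt (2 / (2 * INR n + 1)) * sqrt (2 / (2 * INR n + 1)) * (- (INR n * (INR n + 1)) / 2 * p n * p n)) by ring.
       rewrite sqrt_sqrt by exact Hpos. field. lra. }
  rewrite Rabs_Ropp in HN.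
  set (y := p n ^ 2) in *.
  assert (Hy : 0 <= y) by (unfold y; simpl; nra).
  rewrite En in HN.
  set (m := INR N) in *.
  assert (Q : 0 <= (2 * m + 2) * (2 * m + 2 + 1) / (2 * (2 * m + 2) + 1) * y).
  { apply Rmult_le_pos; [|exact Hy]. apply Rlt_le, Rdiv_lt_0_compat; nra. }
  rewrite Rabs_pos_eq in HN by exact Q.
  replace ((2 * m + 2) * (2 * m + 2 + 1) / (2 * (2 * m + 2) + 1) * y)
    with ((2 * m + 3) * (4 * (m + 1) * y) / (8 * m + 10)) in HN by (field; lra).
  assert (K2 : (2 * m + 3) / (8 * m + 10) >= 1 / 4).
  { apply Rle_ge. apply (Rmult_le_reg_r (4 * (8 * m + 10))); [lra|].
    replace ((2 * m + 3) / (8 * m + 10) * (4 * (8 * m + 10))) with (4 * (2 * m + 3)) by (field; lra).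
    lra. }
  assert (K3 : (2 * m + 3) * (4 * (m + 1) * y) / (8 * m + 10) >= (2 * m + 3) / (8 * m + 10)).
  { unfold Rdiv. apply Rle_ge, Rmult_le_compat_r; [apply Rlt_le, Rinv_0_lt_compat; lra | nra]. }
  simpl in HN. lra.
Qed.
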